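(* Let $\mathbb{X}$ be a finite dimensional real Banach space and $T,A\in\mathbb{B}(\mathbb{X})$. Then $T\perp_B A$ if and only if there exist $x,y\in M_T$ such that $Ax\in(Tx)^+$ and $Ay\in(Ty)^-$.
   Context: $\mathbb{B}(\mathbb{X})$ is the space of bounded linear operators on $\mathbb{X}$ with the operator norm. $S_{\mathbb{X}}$ is the unit sphere and $M_T=\{x\in S_{\mathbb{X}}:\|Tx\|=\|T\|\}$. For elements $u,v$ of a normed space, $u\perp_B v$ (Birkhoff–James orthogonality) means $\|u+\lambda v\|\ge\|u\|$ for all $\lambda\in\mathbb{R}$; $v\in u^+$ means $\|u+\lambda v\|\ge\|u\|$ for all $\lambda\ge0$; $v\in u^-$ means $\|u+\lambda v\|\ge\|u\|$ for all $\lambda\le 0$. *)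

(* Defs.v *)
From Stdlib Require Import Fin Reals Lra Classical ClassicalEpsilon FunctionalExtensionality.
Open Scope R_scope.

(* A finite dimensional real normed space is (isometrically isomorphic to)
   R^n = (Fin.t n -> R) equipped with some norm N. *)
Definition vec (n : nat) := Fin.t n -> R.

Definition vzero {n} : vec n := fun _ => 0.
Definition vadd {n} (x y : vec n) : vec n := fun i => x i + y i.
Definition vscal {n} (c : R) (x : vec n) : vec n := fun i => c * x i.

Definition is_norm {n} (N : vec n -> R) : Prop :=
  (forall x, 0 <= N x) /\
  (forall x, N x = 0 -> x = vzero) /\
  (forall c x, N (vscal c x) = Rabs c * N x) /\
  (forall x y, N (vadd x y) <= N x + N y).

(* Linear operators on R^n (all bounded since the dimension is finite). *)
Definition is_linear {n} (T : vec n -> vec n) : Prop :=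
  (forall x y, T (vadd x y) = vadd (T x) (T y)) /\
  (forall c x, T (vscal c x) = vscal c (T x)).

Definition op_add {n} (T A : vec n -> vec n) : vec n -> vec n :=
  fun x => vadd (T x) (A x).
Definition op_scal {n} (c : R) (A : vec n -> vec n) : vec n -> vec n :=
  fun x => vscal c (A x).

(* Operator norm: sup { N (T x) | N x = 1 } (chosen by epsilon; the lub exists
   in finite dimension). *)
Definition opnorm_set {n} (N : vec n -> R) (T : vec n -> vec n) (r : R) : Prop :=
  exists x, N x = 1 /\ r = N (T x).

Definition opnorm {n} (N : vec n -> R) (T : vec n -> vec n) : R :=
  epsilon (inhabits 0) (fun c => is_lub (opnorm_set N T) c).

Definition M_set {n} (N : vec n -> R) (T : vec n -> vec n) (x : vec n) : Prop :=
  N x = 1 /\ N (T x) = opnorm N T.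

Definition BJ_orth_op {n} (N : vec n -> R) (T A : vec n -> vec n) : Prop :=
  forall lam : R, opnorm N (op_add T (op_scal lam A)) >= opnorm N T.

Definition in_plus {n} (N : vec n -> R) (u v : vec n) : Prop :=
  forall lam : R, lam >= 0 -> N (vadd u (vscal lam v)) >= N u.
Definition in_minus {n} (N : vec n -> R) (u v : vec n) : Prop :=
  forall lam : R, lam <= 0 -> N (vadd u (vscal lam v)) >= N u.

(* Main.v *)
Require Import Defs.
From Stdlib Require Import Reals Lra Lia List Rtopology FinFun.
From Stdlib Require Import Classical ClassicalEpsilon FunctionalExtensionality.
Open Scope R_scope.

Fixpoint vmax (n : nat) : vec n -> R :=
  match n with
  | 0%nat => fun _ => 0
  | S m => fun x => Rmax (Rabs (x Fin.F1)) (vmax m (fun i => x (Fin.FS i)))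
  end.

Lemma vmax_ge : forall n (x : vec n) i, Rabs (x i) <= vmax n x.
Proof.
  intros n x i; induction i as [m|m i IH].
  - simpl. apply Rmax_l.
  - simpl. eapply Rle_trans; [apply (IH (fun j => x (Fin.FS j)))|apply Rmax_r].
Qed.

Lemma vmax_le : forall n (x : vec n) b, 0 <= b -> (forall i, Rabs (x i) <= b) -> vmax n x <= b.
Proof.
  induction n; intros x b Hb H; simpl; [lra|].
  apply Rmax_lub; [apply H|]. apply IHn; auto.
Qed.

Lemma vmax_nonneg : forall n (x : vec n), 0 <= vmax n x.
Proof. induction n; intros x; simpl; [lra|]. eapply Rle_trans;[apply Rabs_pos|apply Rmax_l]. Qed.

Lemma vmax_scal : forall n (c : R) (x : vec n), vmax n (vscal c x) = Rabs c * vmax n x.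
Proof.
  induction n; intros c x; simpl; [ring|].
  unfold vscal at 1. rewrite Rabs_mult.
  rewrite <- RmaxRmult by apply Rabs_pos. f_equal.
  apply (IHn c (fun i => x (Fin.FS i))).
Qed.

Lemma fin_uniform : forall n (P : Fin.t n -> nat -> Prop),
  (forall i K K', (K <= K')%nat -> P i K -> P i K') ->
  (forall i, exists K, P i K) -> exists K, forall i, P i K.
Proof.
  induction n; intros P Hm H.
  - exists 0%nat. intros i. exact (Fin.case0 (fun i => P i 0%nat) i).
  - destruct (IHn (fun i => P (Fin.FS i))) as [K1 HK1].
    + intros; eapply Hm; eauto.
    + intros; apply H.
    + destruct (H Fin.F1) as [K0 HK0].
      exists (Nat.max K0 K1). intros i.
      pattern i; apply Fin.caseS'.
      * eapply Hm; [|exact HK0]. lia.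
      * intros j; eapply Hm; [|apply HK1]. lia.
Qed.

Definition strict_incr (phi : nat -> nat) := forall k, (phi k < phi (S k))%nat.

Lemma strict_incr_ge : forall phi, strict_incr phi -> forall k, (k <= phi k)%nat.
Proof. intros phi H k; induction k; [lia|]. specialize (H k); lia. Qed.

Lemma strict_incr_comp : forall f g, strict_incr f -> strict_incr g -> strict_incr (fun k => f (g k)).
Proof.
  intros f g Hf Hg k. specialize (Hg k).
  assert (forall a b, (a < b)%nat -> (f a < f b)%nat).
  { intros a b Hab; induction Hab; [apply Hf|]. specialize (Hf m); lia. }
  auto.
Qed.

Lemma Un_cv_subseq : forall u l phi, strict_incr phi -> Un_cv u l -> Un_cv (fun k => u (phi k)) l.
Proof.
  intros u l phi Hp H eps He. destruct (H eps He) as [K HK].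
  exists K. intros k Hk. apply HK. pose proof (strict_incr_ge phi Hp k). lia.
Qed.

Lemma BW1 : forall (u : nat -> R) B, (forall k, Rabs (u k) <= B) ->
  exists phi l, strict_incr phi /\ Un_cv (fun k => u (phi k)) l.
Proof.
  intros u B HB.
  destruct (Bolzano_Weierstrass u (fun c => -B <= c <= B) (compact_P3 _ _)) as [l Hl].
  { intros k; specialize (HB k). unfold Rabs in HB; destruct (Rcase_abs (u k)); lra. }
  assert (Hg : forall N k, exists p, (N <= p)%nat /\ Rabs (u p - l) < / INR (S k)).
  { intros N k. assert (Hpos : 0 < / INR (S k)) by (apply Rinv_0_lt_compat, lt_0_INR; lia).
    destruct (Hl (disc l (mkposreal _ Hpos)) N) as [p [Hp1 Hp2]].
    - exists (mkposreal _ Hpos). intros y Hy; exact Hy.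
    - exists p; split; auto. }
  assert (Hg2 : forall Nk : nat * nat, exists p, (fst Nk <= p)%nat /\ Rabs (u p - l) < / INR (S (snd Nk))).
  { intros [N k]; apply Hg. }
  destruct (choice _ Hg2) as [g Hgs].
  set (phi := fix phi k := match k with 0%nat => g (0%nat,0%nat) | S k' => g (S (phi k'), S k') end).
  exists phi, l. split.
  - intros k. simpl. destruct (Hgs (S (phi k), S k)) as [H1 _]. simpl in H1. lia.
  - assert (Hc : forall k, Rabs (u (phi k) - l) < / INR (S k)).
    { intros [|k]; simpl; [apply (Hgs (0%nat,0%nat))|apply (Hgs (S (phi k), S k))]. }
    intros eps He. destruct (archimed (/ eps)) as [Ha _].
    assert (0 <= IZR (up (/eps))) by (pose proof (Rinv_0_lt_compat _ He); lra).
    destruct (IZN (up (/ eps))) as [K HK]. { apply le_IZR; lra. }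
    exists K. intros k Hk. unfold Rdist. eapply Rlt_trans; [apply Hc|].
    rewrite HK, <- INR_IZR_INZ in Ha.
    apply le_INR in Hk. rewrite S_INR.
    rewrite <- (Rinv_inv eps). apply Rinv_lt_contravar.
    + apply Rmult_lt_0_compat; [apply Rinv_0_lt_compat; lra| pose proof (pos_INR k); lra].
    + lra.
Qed.

Lemma BWn : forall n (x : nat -> vec n) B, (forall k i, Rabs (x k i) <= B) ->
  exists phi (l : vec n), strict_incr phi /\ forall i, Un_cv (fun k => x (phi k) i) (l i).
Proof.
  induction n; intros x B HB.
  - exists (fun k => k), (fun _ => 0). split; [intros k; lia|].
    intros i; exact (Fin.case0 (fun i => Un_cv (fun k => x k i) 0) i).
  - destruct (IHn (fun k i => x k (Fin.FS i)) B) as [phi1 [l1 [Hp1 Hl1]]].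
    { intros; apply HB. }
    destruct (BW1 (fun k => x (phi1 k) Fin.F1) B) as [phi2 [l0 [Hp2 Hl0]]].
    { intros; apply HB. }
    exists (fun k => phi1 (phi2 k)), (fun i => Fin.caseS' i (fun _ => R) l0 (fun j => l1 j)).
    split; [apply strict_incr_comp; auto|].
    intros i; pattern i; apply Fin.caseS'; simpl.
    + exact Hl0.
    + intros j. apply (Un_cv_subseq (fun k => x (phi1 k) (Fin.FS j))); auto.
Qed.
Definition vsub {n} (x y : vec n) : vec n := vadd x (vscal (-1) y).

Lemma norm_zero : forall n (N : vec n -> R), is_norm N -> N vzero = 0.
Proof.
  intros n N [H0 [H1 [H2 H3]]].
  replace (@vzero n) with (vscal 0 (@vzero n)) by (apply functional_extensionality; intros; unfold vscal, vzero; ring).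
  rewrite H2, Rabs_R0; ring.
Qed.

Lemma norm_sub_sym : forall n (N : vec n -> R), is_norm N -> forall x y, N (vsub x y) = N (vsub y x).
Proof.
  intros n N [H0 [H1 [H2 H3]]] x y.
  replace (vsub y x) with (vscal (-1) (vsub x y)) by (apply functional_extensionality; intros; unfold vsub, vadd, vscal; ring).
  rewrite H2; replace (Rabs (-1)) with 1 by (unfold Rabs; destruct (Rcase_abs (-1)); lra); ring.
Qed.

Lemma norm_rev : forall n (N : vec n -> R), is_norm N -> forall x y, N x - N y <= N (vsub x y).
Proof.
  intros n N HN x y. pose proof HN as [H0 [H1 [H2 H3]]].
  replace x with (vadd (vsub x y) y) at 1 by (apply functional_extensionality; intros; unfold vsub, vadd, vscal; ring).
  specialize (H3 (vsub x y) y). lra.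
Qed.

Lemma lin_zero : forall n (G : vec n -> vec n), is_linear G -> G vzero = vzero.
Proof.
  intros n G [Ha Hs].
  replace (@vzero n) with (vscal 0 (@vzero n)) by (apply functional_extensionality; intros; unfold vscal, vzero; ring).
  rewrite Hs. apply functional_extensionality; intros; unfold vscal, vzero; ring.
Qed.

Lemma lin_sub : forall n (G : vec n -> vec n), is_linear G -> forall x y, G (vsub x y) = vsub (G x) (G y).
Proof. intros n G [Ha Hs] x y. unfold vsub. rewrite Ha, Hs. reflexivity. Qed.

Definition ebas {n} (a : Fin.t n) : vec n := fun j => if Fin.eq_dec a j then 1 else 0.
Definition mask {n} (l : list (Fin.t n)) (x : vec n) : vec n :=
  fun j => if in_dec Fin.eq_dec j l then x j else 0.

Fixpoint fin_enum (n : nat) : list (Fin.t n) :=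
  match n with 0%nat => nil | S m => Fin.F1 :: map Fin.FS (fin_enum m) end.

Lemma fin_enum_in : forall n (i : Fin.t n), In i (fin_enum n).
Proof.
  intros n i; induction i; simpl; [left; auto|right]. apply in_map; auto.
Qed.

Lemma fin_enum_nodup : forall n, NoDup (fin_enum n).
Proof.
  induction n; simpl; constructor.
  - intros Hin. apply in_map_iff in Hin. destruct Hin as [x [Hx _]]. inversion Hx.
  - apply Injective_map_NoDup; auto. intros a b Hab; apply Fin.FS_inj; auto.
Qed.

Fixpoint sumN {n} (F : Fin.t n -> R) (l : list (Fin.t n)) : R :=
  match l with nil => 0 | a :: l' => F a + sumN F l' end.

Lemma mask_bound : forall n (N : vec n -> R), is_norm N -> forall G, is_linear G ->
  forall l, NoDup l -> forall x, N (G (mask l x)) <= sumN (fun a => N (G (ebas a))) l * vmax n x.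
Proof.
  intros n N HN G HG l Hl x. pose proof HN as [H0 [H1 [H2 H3]]]. pose proof HG as [Ga Gs].
  induction Hl as [|a l Hnin Hl IH]; simpl.
  - replace (mask nil x) with (@vzero n) by (apply functional_extensionality; intros; reflexivity).
    rewrite lin_zero, norm_zero; auto; lra.
  - replace (mask (a :: l) x) with (vadd (vscal (x a) (ebas a)) (mask l x)).
    + rewrite Ga, Gs. eapply Rle_trans; [apply H3|]. rewrite H2.
      pose proof (vmax_ge n x a). pose proof (H0 (G (ebas a))). 
      assert (Rabs (x a) * N (G (ebas a)) <= N (G (ebas a)) * vmax n x) by nra. lra.
    + apply functional_extensionality; intros j. unfold vadd, vscal, ebas, mask.
      destruct (Fin.eq_dec a j) as [<-|Hne].
      * destruct (in_dec Fin.eq_dec a l); [contradiction|].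
        destruct (in_dec Fin.eq_dec a (a :: l)) as [_|Hc]; [ring|exfalso; apply Hc; left; auto].
      * destruct (in_dec Fin.eq_dec j l) as [Hi|Hi];
        destruct (in_dec Fin.eq_dec j (a :: l)) as [Hj|Hj]; try ring.
        -- exfalso; apply Hj; right; auto.
        -- destruct Hj as [Hj|Hj]; [congruence|contradiction].
Qed.

Lemma upper_bound_vmax : forall n (N : vec n -> R), is_norm N -> forall G, is_linear G ->
  exists K, 0 <= K /\ forall x, N (G x) <= K * vmax n x.
Proof.
  intros n N HN G HG. exists (Rmax 0 (sumN (fun a => N (G (ebas a))) (fin_enum n))).
  split; [apply Rmax_l|]. intros x.
  replace x with (mask (fin_enum n) x) at 1.
  - eapply Rle_trans; [apply mask_bound; auto; apply fin_enum_nodup|].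
    apply Rmult_le_compat_r; [apply vmax_nonneg|apply Rmax_r].
  - apply functional_extensionality; intros j; unfold mask.
    destruct (in_dec Fin.eq_dec j (fin_enum n)) as [_|Hc]; auto.
    exfalso; apply Hc, fin_enum_in.
Qed.

Lemma id_linear : forall n, is_linear (fun x : vec n => x).
Proof. split; auto. Qed.
Lemma small_le : forall a, (forall eps, eps > 0 -> a <= eps) -> a <= 0.
Proof. intros a H. destruct (Rle_dec a 0); auto. specialize (H (a/2)). lra. Qed.

Lemma inv_small : forall eps, eps > 0 -> exists K, forall k, (k >= K)%nat -> / INR (S k) < eps.
Proof.
  intros eps He. destruct (archimed (/ eps)) as [Ha _].
  assert (0 <= IZR (up (/eps))) by (pose proof (Rinv_0_lt_compat _ He); lra).
  destruct (IZN (up (/ eps))) as [K HK]. { apply le_IZR; lra. }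
  exists K. intros k Hk.
  rewrite HK, <- INR_IZR_INZ in Ha.
  apply le_INR in Hk. rewrite S_INR.
  rewrite <- (Rinv_inv eps). apply Rinv_lt_contravar.
  + apply Rmult_lt_0_compat; [apply Rinv_0_lt_compat; lra| pose proof (pos_INR k); lra].
  + lra.
Qed.

Lemma cv_vmax : forall n (z : nat -> vec n) l, (forall i, Un_cv (fun k => z k i) (l i)) ->
  forall eps, eps > 0 -> exists K, forall k, (k >= K)%nat -> vmax n (vsub (z k) l) <= eps.
Proof.
  intros n z l Hc eps He.
  destruct (fin_uniform n (fun i K => forall k, (k >= K)%nat -> Rabs (z k i - l i) < eps)) as [K HK].
  - intros i K K' HKK' H k Hk. apply H. lia.
  - intros i. destruct (Hc i eps He) as [K HK]. exists K. exact HK.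
  - exists K. intros k Hk. apply vmax_le; [lra|]. intros i.
    unfold vsub, vadd, vscal. specialize (HK i k Hk).
    replace (z k i + -1 * l i) with (z k i - l i) by ring. lra.
Qed.

Lemma vmax_tri : forall n (a b : vec n), vmax n a <= vmax n b + vmax n (vsub a b).
Proof.
  intros n a b. apply vmax_le.
  - pose proof (vmax_nonneg n b); pose proof (vmax_nonneg n (vsub a b)); lra.
  - intros i. pose proof (vmax_ge n b i). pose proof (vmax_ge n (vsub a b) i).
    unfold vsub, vadd, vscal in *.
    replace (a i) with (b i + (a i + -1 * b i)) by ring.
    pose proof (Rabs_triang (b i) (a i + -1 * b i)). lra.
Qed.

Lemma lower_bound_vmax : forall n (N : vec n -> R), is_norm N ->
  exists C, 0 <= C /\ forall x, vmax n x <= C * N x.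
Proof.
  intros n N HN. pose proof HN as [H0 [H1 [H2 H3]]].
  apply NNPP; intros Hneg.
  assert (Hk : forall k : nat, exists x, INR (S k) * N x < vmax n x).
  { intros k. apply NNPP; intros Hc. apply Hneg. exists (INR (S k)).
    split; [apply pos_INR|]. intros x. apply Rnot_lt_le. intros Hl. apply Hc. exists x; auto. }
  destruct (choice _ Hk) as [xs Hxs].
  assert (Hvpos : forall k, 0 < vmax n (xs k)).
  { intros k. specialize (Hxs k). pose proof (H0 (xs k)). pose proof (pos_INR (S k)). nra. }
  set (y := fun k => vscal (/ vmax n (xs k)) (xs k)).
  assert (Hy1 : forall k, vmax n (y k) = 1).
  { intros k. unfold y. rewrite vmax_scal. rewrite Rabs_right.
    - field. specialize (Hvpos k); lra.
    - left; apply Rinv_0_lt_compat; auto. }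
  assert (HyN : forall k, N (y k) < / INR (S k)).
  { intros k. unfold y. rewrite H2. rewrite Rabs_right by (left; apply Rinv_0_lt_compat; auto).
    specialize (Hxs k). specialize (Hvpos k). pose proof (lt_0_INR (S k) ltac:(lia)).
    apply (Rmult_lt_reg_l (vmax n (xs k) * INR (S k))). nra.
    field_simplify; try lra. }
  destruct (BWn n y 1) as [phi [l [Hphi Hl]]].
  { intros k i. rewrite <- (Hy1 k). apply vmax_ge. }
  destruct (upper_bound_vmax n N HN _ (id_linear n)) as [K [HK0 HK]].
  assert (HNl : N l <= 0).
  { apply small_le. intros eps He.
    destruct (cv_vmax n (fun k => y (phi k)) l Hl (eps / (2 * (K+1)))) as [K1 HK1].
    { apply Rdiv_lt_0_compat; lra. }
    destruct (inv_small (eps/2)) as [K2 HK2]; [lra|].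
    set (k := Nat.max K1 K2).
    specialize (HK1 k ltac:(lia)). specialize (HK2 (phi k)).
    assert (phi k >= K2)%nat by (pose proof (strict_incr_ge phi Hphi k); lia).
    specialize (HK2 H). specialize (HyN (phi k)).
    pose proof (norm_rev n N HN l (y (phi k))).
    rewrite norm_sub_sym in H4 by auto.
    specialize (HK (vsub (y (phi k)) l)).
    assert (K * vmax n (vsub (y (phi k)) l) <= K * (eps / (2 * (K + 1)))) by (apply Rmult_le_compat_l; auto).
    assert (K * (eps / (2 * (K + 1))) <= eps / 2).
    { unfold Rdiv. rewrite Rinv_mult. apply (Rmult_le_reg_r (2 * (K+1))). lra.
      field_simplify; try lra. }
    lra. }
  assert (Hl0 : l = vzero) by (apply H1; pose proof (H0 l); lra).
  destruct (cv_vmax n (fun k => y (phi k)) l Hl (1/2)) as [K1 HK1]; [lra|].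
  specialize (HK1 K1 (le_n _)). pose proof (vmax_tri n (y (phi K1)) l).
  rewrite Hy1 in H. assert (vmax n l <= 0).
  { apply vmax_le; [lra|]. intros i; rewrite Hl0; unfold vzero; rewrite Rabs_R0; lra. }
  lra.
Qed.
Lemma op_lin : forall n (T A : vec n -> vec n) c, is_linear T -> is_linear A ->
  is_linear (op_add T (op_scal c A)).
Proof.
  intros n T A c [Ta Ts] [Aa As]. unfold op_add, op_scal. split.
  - intros x y. rewrite Ta, Aa. apply functional_extensionality; intros; unfold vadd, vscal; ring.
  - intros d x. rewrite Ts, As. apply functional_extensionality; intros; unfold vadd, vscal; ring.
Qed.

Lemma op_bound : forall n (N : vec n -> R), is_norm N -> forall G, is_linear G ->
  exists C, 0 <= C /\ forall x, N (G x) <= C * N x.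
Proof.
  intros n N HN G HG.
  destruct (upper_bound_vmax n N HN G HG) as [K [HK0 HK]].
  destruct (lower_bound_vmax n N HN) as [C [HC0 HC]].
  exists (K * C). split; [nra|]. intros x. specialize (HK x). specialize (HC x).
  assert (K * vmax n x <= K * (C * N x)) by (apply Rmult_le_compat_l; auto). lra.
Qed.

Lemma unit_exists : forall n (N : vec n -> R), is_norm N -> (1 <= n)%nat -> exists x, N x = 1.
Proof.
  intros n N HN Hn. pose proof HN as [H0 [H1 [H2 H3]]].
  destruct n as [|m]; [lia|].
  set (e := @ebas (S m) Fin.F1).
  assert (Hne : N e <> 0).
  { intros Hz. apply H1 in Hz. assert (e Fin.F1 = vzero Fin.F1) by (rewrite Hz; auto).
    unfold e, ebas, vzero in H. destruct (Fin.eq_dec Fin.F1 Fin.F1); [lra|congruence]. }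
  exists (vscal (/ N e) e). rewrite H2. rewrite Rabs_right.
  - field; auto.
  - left; apply Rinv_0_lt_compat. pose proof (H0 e); lra.
Qed.

Lemma opnorm_lub : forall n (N : vec n -> R), is_norm N -> (1 <= n)%nat -> forall G, is_linear G ->
  is_lub (opnorm_set N G) (opnorm N G).
Proof.
  intros n N HN Hn G HG. unfold opnorm. apply epsilon_spec.
  destruct (op_bound n N HN G HG) as [C [HC0 HC]].
  destruct (completeness (opnorm_set N G)) as [m Hm].
  - exists C. intros r [x [Hx ->]]. specialize (HC x). rewrite Hx in HC. lra.
  - destruct (unit_exists n N HN Hn) as [x Hx]. exists (N (G x)), x. auto.
  - exists m; auto.
Qed.

Lemma lub_approx : forall E s eps, is_lub E s -> eps > 0 -> exists r, E r /\ r > s - eps.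
Proof.
  intros E s eps [Hub Hl] He. apply NNPP; intros Hc.
  assert (is_upper_bound E (s - eps)).
  { intros r Hr. apply Rnot_lt_le. intros Hlt. apply Hc. exists r. split; auto. }
  specialize (Hl _ H). lra.
Qed.

Lemma cv_norm : forall n (N : vec n -> R), is_norm N -> forall (z : nat -> vec n) l,
  (forall i, Un_cv (fun k => z k i) (l i)) ->
  forall eps, eps > 0 -> exists K, forall k, (k >= K)%nat -> N (vsub (z k) l) <= eps.
Proof.
  intros n N HN z l Hc eps He.
  destruct (upper_bound_vmax n N HN _ (id_linear n)) as [K [HK0 HK]].
  destruct (cv_vmax n z l Hc (eps / (K + 1))) as [K1 HK1].
  { apply Rdiv_lt_0_compat; lra. }
  exists K1. intros k Hk. specialize (HK1 k Hk). specialize (HK (vsub (z k) l)).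
  assert (K * vmax n (vsub (z k) l) <= K * (eps / (K + 1))) by (apply Rmult_le_compat_l; auto).
  assert (K * (eps / (K + 1)) <= eps).
  { apply (Rmult_le_reg_r (K+1)). lra. field_simplify; lra. }
  lra.
Qed.
Lemma lam_facts : forall k, 0 < / INR (S k) <= 1.
Proof.
  intros k. pose proof (pos_INR k). rewrite S_INR. split.
  - apply Rinv_0_lt_compat; lra.
  - rewrite <- Rinv_1. apply Rinv_le_contravar; lra.
Qed.

Lemma plus_case : forall n (N : vec n -> R), is_norm N -> (1 <= n)%nat ->
  forall T A, is_linear T -> is_linear A ->
  (forall lam, lam >= 0 -> opnorm N (op_add T (op_scal lam A)) >= opnorm N T) ->
  exists x, M_set N T x /\ in_plus N (T x) (A x).
Proof.
  intros n N HN Hn T A HT HA Hbj. pose proof HN as [H0 [H1 [H2 H3]]].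
  set (t := opnorm N T).
  assert (Hlt : is_lub (opnorm_set N T) t) by (apply opnorm_lub; auto).
  assert (Hx : forall k : nat, exists x, N x = 1 /\
     N (vadd (T x) (vscal (/ INR (S k)) (A x))) > t - / INR (S k) * / INR (S k)).
  { intros k. pose proof (lam_facts k) as Hl.
    assert (Hlub := opnorm_lub n N HN Hn _ (op_lin n T A (/ INR (S k)) HT HA)).
    destruct (lub_approx _ _ (/ INR (S k) * / INR (S k)) Hlub) as [r [[x [Hx1 ->]] Hr]].
    { nra. }
    exists x. split; auto. specialize (Hbj (/ INR (S k)) ltac:(lra)). unfold t.
    change (N (op_add T (op_scal (/ INR (S k)) A) x) > opnorm N T - / INR (S k) * / INR (S k)). lra. }
  destruct (choice _ Hx) as [xs Hxs].
  destruct (lower_bound_vmax n N HN) as [C0 [HC00 HC0]].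
  destruct (op_bound n N HN T HT) as [CT [HCT0 HCT]].
  destruct (op_bound n N HN A HA) as [CA [HCA0 HCA]].
  destruct (BWn n xs C0) as [phi [z [Hphi Hz]]].
  { intros k i. eapply Rle_trans; [apply vmax_ge|]. rewrite <- (Rmult_1_r C0).
    rewrite <- (proj1 (Hxs k)). apply HC0. }
  assert (Hd := cv_norm n N HN (fun k => xs (phi k)) z Hz).
  assert (Hlam : forall eps, eps > 0 -> exists K, forall k, (k >= K)%nat -> / INR (S (phi k)) < eps).
  { intros eps He. destruct (inv_small eps He) as [K HK]. exists K. intros k Hk. apply HK.
    pose proof (strict_incr_ge phi Hphi k). lia. }
  assert (Hw1 : forall k, N (xs k) = 1) by (intros k; apply Hxs).
  assert (HwT : forall k, N (T (xs k)) <= t).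
  { intros k. apply Hlt. exists (xs k). split; auto. }
  assert (Hz1 : N z = 1).
  { assert (Ha : Rabs (N z - 1) <= 0).
    { apply small_le. intros eps He. destruct (Hd eps He) as [K HK]. specialize (HK K (le_n _)).
      pose proof (norm_rev n N HN (xs (phi K)) z). pose proof (norm_rev n N HN z (xs (phi K))).
      rewrite norm_sub_sym in H4 by auto. rewrite Hw1 in *.
      unfold Rabs; destruct (Rcase_abs (N z - 1)); lra. }
    pose proof (Rabs_pos (N z - 1)). assert (Rabs (N z - 1) = 0) by lra.
    unfold Rabs in H4; destruct (Rcase_abs (N z - 1)); lra. }
  assert (HTz : N (T z) = t).
  { assert (N (T z) <= t) by (apply Hlt; exists z; auto).
    assert (t - N (T z) <= 0).
    { apply small_le. intros eps He.
      destruct (Hd (eps / (2 * (CT + 1)))) as [K1 HK1]. { apply Rdiv_lt_0_compat; lra. }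
      destruct (Hlam (eps / (2 * (CA + 1)))) as [K2 HK2]. { apply Rdiv_lt_0_compat; lra. }
      set (k := Nat.max K1 K2). specialize (HK1 k ltac:(lia)). specialize (HK2 k ltac:(lia)).
      set (w := xs (phi k)) in *. set (lm := / INR (S (phi k))) in *.
      assert (Hl := lam_facts (phi k)). fold lm in Hl.
      destruct (Hxs (phi k)) as [_ HB]. fold w lm in HB.
      pose proof (H3 (T w) (vscal lm (A w))) as H5. rewrite H2 in H5.
      rewrite Rabs_right in H5 by lra. specialize (HCA w). unfold w in HCA. rewrite Hw1 in HCA. fold w in HCA.
      pose proof (norm_rev n N HN (T w) (T z)) as H6. rewrite <- lin_sub in H6 by auto.
      specialize (HCT (vsub w z)).
      assert (CT * N (vsub w z) <= CT * (eps / (2 * (CT + 1)))) by (apply Rmult_le_compat_l; auto).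
      assert (CT * (eps / (2 * (CT + 1))) <= eps / 2).
      { apply (Rmult_le_reg_r (2 * (CT+1))). lra. field_simplify; lra. }
      assert (lm * lm <= lm * (eps / (2 * (CA + 1)))) by (apply Rmult_le_compat_l; lra).
      assert (lm * CA <= (eps / (2 * (CA + 1))) * CA) by (apply Rmult_le_compat_r; lra).
      assert ((eps / (2 * (CA + 1))) + (eps / (2 * (CA + 1))) * CA = eps / 2) by (field; lra).
      assert (lm * N (A w) <= lm * CA) by (apply Rmult_le_compat_l; lra).
      assert (lm * (eps / (2 * (CA + 1))) <= 1 * (eps / (2 * (CA + 1)))).
      { apply Rmult_le_compat_r; [left; apply Rdiv_lt_0_compat; lra|lra]. }
      lra. }
    lra. }
  exists z. split; [split; auto|].
  intros mu Hmu. rewrite HTz.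
  destruct (Req_dec mu 0) as [->|Hmu0].
  { replace (vadd (T z) (vscal 0 (A z))) with (T z) by (apply functional_extensionality; intros; unfold vadd, vscal; ring). lra. }
  assert (Hmup : mu > 0) by lra.
  apply Rle_ge. apply Rminus_le. apply small_le. intros eps He.
  destruct (Hd (eps / (2 * (CT + mu * CA + 1)))) as [K1 HK1].
  { apply Rdiv_lt_0_compat; nra. }
  destruct (Hlam (Rmin mu (eps / (2 * mu)))) as [K2 HK2].
  { apply Rmin_glb_lt; [lra|]. apply Rdiv_lt_0_compat; lra. }
  set (k := Nat.max K1 K2). specialize (HK1 k ltac:(lia)). specialize (HK2 k ltac:(lia)).
  set (w := xs (phi k)) in *. set (lm := / INR (S (phi k))) in *.
  assert (Hl := lam_facts (phi k)). fold lm in Hl.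
  destruct (Hxs (phi k)) as [_ HB]. fold w lm in HB.
  pose proof (Rmin_l mu (eps / (2 * mu))). pose proof (Rmin_r mu (eps / (2 * mu))).
  set (th := lm / mu).
  assert (Hth : 0 < th <= 1).
  { unfold th. split; [apply Rdiv_lt_0_compat; lra|].
    apply (Rmult_le_reg_r mu); auto. field_simplify; lra. }
  set (f := N (vadd (T w) (vscal mu (A w)))).
  assert (Hconv : vadd (T w) (vscal lm (A w)) =
     vadd (vscal (1 - th) (T w)) (vscal th (vadd (T w) (vscal mu (A w))))).
  { apply functional_extensionality; intros j; unfold vadd, vscal, th. field. lra. }
  assert (Hf : f >= t - lm * mu).
  { rewrite Hconv in HB. pose proof (H3 (vscal (1 - th) (T w)) (vscal th (vadd (T w) (vscal mu (A w))))) as H6.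
    rewrite !H2 in H6. rewrite (Rabs_right (1 - th)) in H6 by lra.
    rewrite (Rabs_right th) in H6 by lra. fold f in H6.
    specialize (HwT (phi k)). fold w in HwT.
    assert ((1 - th) * N (T w) <= (1 - th) * t) by (apply Rmult_le_compat_l; lra).
    assert (H8 : th * f > th * t - lm * lm) by lra.
    assert (Hm : mu * th = lm) by (unfold th; field; lra).
    assert (lm * f > lm * t - lm * lm * mu).
    { assert (H9 : mu * (th * f) > mu * (th * t - lm * lm)) by (apply Rmult_gt_compat_l; auto).
      replace (lm * f) with (mu * (th * f)) by (rewrite <- Hm; ring).
      replace (lm * t - lm * lm * mu) with (mu * (th * t - lm * lm)) by (rewrite <- Hm; ring). exact H9. }
    apply Rle_ge. apply (Rmult_le_reg_l lm); [lra|]. nra. }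
  assert (Hdiff : vsub (vadd (T w) (vscal mu (A w))) (vadd (T z) (vscal mu (A z))) =
     vadd (T (vsub w z)) (vscal mu (A (vsub w z)))).
  { rewrite !lin_sub by auto. apply functional_extensionality; intros j; unfold vsub, vadd, vscal; ring. }
  pose proof (norm_rev n N HN (vadd (T w) (vscal mu (A w))) (vadd (T z) (vscal mu (A z)))) as H6.
  rewrite Hdiff in H6. fold f in H6.
  pose proof (H3 (T (vsub w z)) (vscal mu (A (vsub w z)))) as H7. rewrite H2, Rabs_right in H7 by lra.
  specialize (HCT (vsub w z)). specialize (HCA (vsub w z)).
  set (d := N (vsub w z)) in *.
  assert (Hd0 : 0 <= d) by apply H0.
  assert ((CT + mu * CA) * d <= (CT + mu * CA) * (eps / (2 * (CT + mu * CA + 1)))) by (apply Rmult_le_compat_l; nra).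
  assert ((CT + mu * CA) * (eps / (2 * (CT + mu * CA + 1))) <= eps / 2).
  { apply (Rmult_le_reg_r (2 * (CT + mu * CA + 1))). nra. field_simplify; nra. }
  assert (lm * mu <= eps / (2 * mu) * mu) by (apply Rmult_le_compat_r; lra).
  assert (eps / (2 * mu) * mu = eps / 2) by (field; lra).
  assert (mu * N (A (vsub w z)) <= mu * (CA * d)) by (apply Rmult_le_compat_l; lra).
  nra.
Qed.
Lemma scal_lin : forall n (A : vec n -> vec n) c, is_linear A -> is_linear (op_scal c A).
Proof.
  intros n A c [Aa As]. unfold op_scal. split.
  - intros x y. rewrite Aa. apply functional_extensionality; intros; unfold vadd, vscal; ring.
  - intros d x. rewrite As. apply functional_extensionality; intros; unfold vadd, vscal; ring.
Qed.

Theorem mainTheorem2 (n : nat) (Hn : (1 <= n)%nat) (N : vec n -> R) (HN : is_norm N)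
  (T A : vec n -> vec n) (HT : is_linear T) (HA : is_linear A) :
  BJ_orth_op N T A <->
  exists x y, M_set N T x /\ M_set N T y /\
    in_plus N (T x) (A x) /\ in_minus N (T y) (A y).
Proof.
  split.
  - intros Hbj.
    destruct (plus_case n N HN Hn T A HT HA) as [x [Hx1 Hx2]].
    { intros lam _; apply Hbj. }
    destruct (plus_case n N HN Hn T (op_scal (-1) A) HT (scal_lin n A (-1) HA)) as [y [Hy1 Hy2]].
    { intros lam _.
      replace (op_add T (op_scal lam (op_scal (-1) A))) with (op_add T (op_scal (- lam) A)).
      - apply Hbj.
      - apply functional_extensionality; intros v; apply functional_extensionality; intros j.
        unfold op_add, op_scal, vadd, vscal; ring. }
    exists x, y. split; [|split; [|split]]; auto.
    intros lam Hlam. specialize (Hy2 (- lam) ltac:(lra)).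
    replace (vadd (T y) (vscal lam (A y))) with (vadd (T y) (vscal (- lam) (op_scal (-1) A y))); auto.
    apply functional_extensionality; intros j. unfold op_add, op_scal, vadd, vscal; ring.
  - intros [x [y [[Hx1 Hx2] [[Hy1 Hy2] [Hp Hm]]]]] lam.
    assert (Hlub := opnorm_lub n N HN Hn _ (op_lin n T A lam HT HA)).
    destruct (Rle_dec 0 lam) as [Hl|Hl].
    + assert (N (op_add T (op_scal lam A) x) <= opnorm N (op_add T (op_scal lam A))).
      { apply Hlub. exists x; auto. }
      specialize (Hp lam ltac:(lra)). assert (N (vadd (T x) (vscal lam (A x))) = N (op_add T (op_scal lam A) x)) by reflexivity. lra.
    + assert (N (op_add T (op_scal lam A) y) <= opnorm N (op_add T (op_scal lam A))).
      { apply Hlub. exists y; auto. }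
      specialize (Hm lam ltac:(lra)). assert (N (vadd (T y) (vscal lam (A y))) = N (op_add T (op_scal lam A) y)) by reflexivity. lra.
Qed.
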